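(* Let $\mathcal{G}$ be a groupoid, $\mathbb{K}$ a field, and $(\theta,\sigma)=(\{T_x\},\{\theta_x\},\sigma)$ a groupoid twisted partial action of $\mathcal{G}$ on a $\mathbb{K}$-semigroup $T$, each $T_x$ having identity $1_x$. Then the map $$\Gamma_\theta :\mathcal{G} \to T \rtimes_{\theta, \sigma}\mathcal{G},\qquad x \mapsto 1_x\delta_x,$$ is a partial projective representation with factor set $\sigma$.
   Context: Groupoid: nonempty set with partial associative product, each $x$ with right identity $d(x)=x^{-1}x$, left identity $r(x)=xx^{-1}$ and inverse; $xy$ defined ($\exists xy$) iff $d(x)=r(y)$; $\mathcal{G}_0$ identities, $\mathcal{G}^2,\mathcal{G}^3$ composable pairs/triples. $\mathbb{K}$-semigroup: semigroup with zero and scalar action with $\alpha(\beta s)=(\alpha\beta)s$, $1s=s$, $\alpha(st)=(\alpha s)t=s(\alpha t)$, $0s=0$; $\mathbb{K}$-cancellative if $\alpha s=\beta s$, $s\ne0$ imply $\alpha=\beta$. Groupoid twisted partial action on a $\mathbb{K}$-semigroup $T$: ideals $T_x$ of $T$, each a monoid, semigroup isomorphisms $\theta_x:T_{x^{-1}}\to T_x$ which are $\mathbb{K}$-maps, and $\sigma:\mathcal{G}\times\mathcal{G}\to\mathbb{K}$ such that for $(x,y)\in\mathcal{G}^2$, $(x,y,z)\in\mathcal{G}^3$: $T_x\subseteq T_{r(x)}$, $\theta_e=\mathrm{Id}$ ($e\in\mathcal{G}_0$); $\theta_x(T_{x^{-1}}\cap T_y)=T_x\cap T_{xy}$; $\theta_x\theta_y=\theta_{xy}$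 on $T_{y^{-1}}\cap T_{(xy)^{-1}}$; $\sigma(x,y)=0\iff T_x\cap T_{xy}=0$; $\sigma(x,d(x))=\sigma(r(x),x)=1$; $T_x\cap T_{xy}\cap T_{xyz}\ne0\Rightarrow\sigma(x,y)\sigma(xy,z)=\sigma(y,z)\sigma(x,yz)$. The identity $1_x$ of $T_x$ is a central idempotent with $T_x=T1_x$. Crossed product $T\rtimes_{\theta,\sigma}\mathcal{G}$: quotient of $L=\{a\delta_x:a\in T_x\}\cup\{0\}$, with $(a\delta_x)(b\delta_y)=\theta_x(\theta_x^{-1}(a)b)\sigma(x,y)\delta_{xy}$ if $\exists xy$, $0$ otherwise, by the ideal $\{0\delta_x\}\cup\{0\}$. Partial projective representation of $\mathcal{G}$ on a $\mathbb{K}$-semigroup $Q$: a map $\Gamma:\mathcal{G}\to Q$ such that, with $\xi:Q\to Q/\lambda$ the quotient by $s\lambda t\iff s=\alpha t$, $\alpha\in\mathbb{K}^*$, whenever $\exists xy$: $\xi\Gamma(x^{-1})\xi\Gamma(x)\xi\Gamma(y)=\xi\Gamma(x^{-1})\xi\Gamma(xy)$ and $\xi\Gamma(x)\xi\Gamma(y)\xi\Gamma(y^{-1})=\xi\Gamma(xy)\xi\Gamma(y^{-1})$. Its factor set is the partial map $\sigma$ into $\mathbb{K}^*$ with domain $\{(x,y)\in\mathcal{G}^2:\Gamma(x)\Gamma(y)\ne0\}$ satisfying $\Gamma(x^{-1})\Gamma(x)\Gamma(y)=\Gamma(x^{-1})\Gamma(xy)\sigma(x,y)$ and $\Gamma(x)\Gamma(y)\Gamma(y^{-1})=\Gamma(xy)\Gamma(y^{-1})\sigma(x,y)$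 there. *)

(* Defs.v *)
From HB Require Import structures.
From mathcomp Require Import all_boot all_algebra.
From Stdlib Require Import ClassicalEpsilon.

Set Implicit Arguments.
Unset Strict Implicit.
Unset Printing Implicit Defensive.

Import GRing.Theory.
Local Open Scope ring_scope.

(* Groupoids: a nonempty type with a total function [gmul] whose value  *)
(* is only meaningful on composable pairs, i.e. when [gd x = gr y].     *)
Record groupoid := Groupoid {
  gcar :> Type;
  gmul : gcar -> gcar -> gcar;
  ginv : gcar -> gcar;
  gd : gcar -> gcar;
  gr : gcar -> gcar;
  g_witness : gcar;
  gd_inv : forall x, gd (ginv x) = gr x;
  gr_inv : forall x, gr (ginv x) = gd x;
  gmul_invl : forall x, gmul (ginv x) x = gd x;
  gmul_invr : forall x, gmul x (ginv x) = gr x;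
  gr_d : forall x, gr (gd x) = gd x;
  gd_r : forall x, gd (gr x) = gr x;
  gmul_d : forall x, gmul x (gd x) = x;
  gmul_r : forall x, gmul (gr x) x = x;
  gd_mul : forall x y, gd x = gr y -> gd (gmul x y) = gd y;
  gr_mul : forall x y, gd x = gr y -> gr (gmul x y) = gr x;
  gmulA : forall x y z, gd x = gr y -> gd y = gr z ->
    gmul (gmul x y) z = gmul x (gmul y z)
}.
Arguments gmul {G} : rename.
Arguments ginv {G} : rename.
Arguments gd {G} : rename.
Arguments gr {G} : rename.

Definition is_identity (G : groupoid) (e : G) : Prop := exists x : G, e = gd x.

Record ksemigroup (K : fieldType) := KSemigroup {
  scar :> Type;
  smul : scar -> scar -> scar;
  szero : scar;
  sscale : K -> scar -> scar;
  smulA : forall s t u, smul (smul s t) u = smul s (smul t u);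
  smul0l : forall s, smul szero s = szero;
  smul0r : forall s, smul s szero = szero;
  sscaleA : forall (a b : K) s, sscale a (sscale b s) = sscale (a * b) s;
  sscale1 : forall s, sscale 1 s = s;
  sscale_mull : forall a s t, sscale a (smul s t) = smul (sscale a s) t;
  sscale_mulr : forall a s t, sscale a (smul s t) = smul s (sscale a t);
  sscale0 : forall s, sscale 0 s = szero
}.
Arguments smul {K T} : rename.
Arguments szero {K T} : rename.
Arguments sscale {K T} : rename.

(*   tdom x  = the ideal T_x,  tone x = its identity 1_x,              *)
(*   tth x   = theta_x : T_{x^{-1}} -> T_x,  ttinv x = theta_x^{-1},   *)
(*   tsig    = sigma.                                                  *)
Record twisted_partial_action (G : groupoid) (K : fieldType)
    (T : ksemigroup K) := TPA {
  tdom : G -> T -> Prop;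
  tone : G -> T;
  tth : G -> T -> T;
  ttinv : G -> T -> T;
  tsig : G -> G -> K;
  tdom_zero : forall x, tdom x szero;
  tdom_mull : forall x s a, tdom x a -> tdom x (smul s a);
  tdom_mulr : forall x s a, tdom x a -> tdom x (smul a s);
  tone_in : forall x, tdom x (tone x);
  tone_l : forall x a, tdom x a -> smul (tone x) a = a;
  tone_r : forall x a, tdom x a -> smul a (tone x) = a;
  tth_in : forall x a, tdom (ginv x) a -> tdom x (tth x a);
  ttinv_in : forall x a, tdom x a -> tdom (ginv x) (ttinv x a);
  tth_ttinv : forall x a, tdom x a -> tth x (ttinv x a) = a;
  ttinv_tth : forall x a, tdom (ginv x) a -> ttinv x (tth x a) = a;
  tth_mul : forall x a b, tdom (ginv x) a -> tdom (ginv x) b ->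
    tth x (smul a b) = smul (tth x a) (tth x b);
  tth_scale : forall x (al : K) a, tdom (ginv x) a ->
    tth x (sscale al a) = sscale al (tth x a);
  tdom_r : forall x a, tdom x a -> tdom (gr x) a;
  tth_id : forall e a, is_identity e -> tdom (ginv e) a -> tth e a = a;
  tth_image : forall x y, gd x = gr y ->
    (forall a, tdom (ginv x) a -> tdom y a ->
       tdom x (tth x a) /\ tdom (gmul x y) (tth x a)) /\
    (forall b, tdom x b -> tdom (gmul x y) b ->
       exists a, [/\ tdom (ginv x) a, tdom y a & tth x a = b]);
  tth_comp : forall x y, gd x = gr y -> forall a,
    tdom (ginv y) a -> tdom (ginv (gmul x y)) a ->
    tth x (tth y a) = tth (gmul x y) a;
  tsig_zero : forall x y, gd x = gr y ->
    (tsig x y = 0 <-> (forall a, tdom x a -> tdom (gmul x y) a -> a = szero));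
  tsig_d : forall x, tsig x (gd x) = 1;
  tsig_r : forall x, tsig (gr x) x = 1;
  tsig_cocycle : forall x y z, gd x = gr y -> gd y = gr z ->
    (exists a, [/\ tdom x a, tdom (gmul x y) a,
                   tdom (gmul (gmul x y) z) a & a <> szero]) ->
    tsig x y * tsig (gmul x y) z = tsig y z * tsig x (gmul y z)
}.

(* The crossed product T x|_{theta,sigma} G, realised as the Rees      *)
(* quotient of L by {0 delta_x} \cup {0}: its elements are the zero    *)
(* and the a delta_x with a in T_x, a <> 0.                            *)
Section CrossedProduct.
Variables (G : groupoid) (K : fieldType) (T : ksemigroup K)
          (P : twisted_partial_action G T).

Definition cp_valid (p : option (T * G)) : Prop :=
  match p with
  | None => True
  | Some (a, x) => tdom P x a /\ a <> szero
  end.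

Definition crossed_product := {p : option (T * G) | cp_valid p}.

Definition cp_zero : crossed_product := exist cp_valid None I.

(* the class of a delta_x in the quotient (zero if a = 0) *)
Definition cp_delta (a : T) (x : G) : crossed_product :=
  match excluded_middle_informative (tdom P x a /\ a <> szero) with
  | left H => exist cp_valid (Some (a, x)) H
  | right _ => cp_zero
  end.

Definition cp_mul (p q : crossed_product) : crossed_product :=
  match proj1_sig p, proj1_sig q with
  | Some (a, x), Some (b, y) =>
      match excluded_middle_informative (gd x = gr y) with
      | left _ =>
          cp_delta (sscale (tsig P x y) (tth P x (smul (ttinv P x a) b)))
                   (gmul x y)
      | right _ => cp_zero
      end
  | _, _ => cp_zero
  end.

Definition cp_scale (al : K) (p : crossed_product) : crossed_product :=
  match proj1_sig p with
  | Some (a, x) => cp_delta (sscale al a) x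
  | None => cp_zero
  end.

Definition Gamma_theta (x : G) : crossed_product := cp_delta (tone P x) x.

End CrossedProduct.

(* product [qmul] and scalar action [qscale].  Equality in Q/lambda of  *)
(* xi(s) and xi(t) is  s lambda t,  and xi(s)xi(t)xi(u) = xi(stu).      *)
Definition lambda_rel (K : fieldType) (Q : Type) (qscale : K -> Q -> Q)
  (s t : Q) : Prop := exists al : K, al != 0 /\ s = qscale al t.

Definition partial_projective_rep (G : groupoid) (K : fieldType) (Q : Type)
  (qmul : Q -> Q -> Q) (qscale : K -> Q -> Q) (Gam : G -> Q) : Prop :=
  forall x y : G, gd x = gr y ->
    lambda_rel qscale (qmul (qmul (Gam (ginv x)) (Gam x)) (Gam y))
                      (qmul (Gam (ginv x)) (Gam (gmul x y))) /\
    lambda_rel qscale (qmul (qmul (Gam x) (Gam y)) (Gam (ginv y)))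
                      (qmul (Gam (gmul x y)) (Gam (ginv y))).

Definition is_factor_set (G : groupoid) (K : fieldType) (Q : Type)
  (qmul : Q -> Q -> Q) (qscale : K -> Q -> Q) (qzero : Q) (Gam : G -> Q)
  (sig : G -> G -> K) : Prop :=
  forall x y : G, gd x = gr y -> qmul (Gam x) (Gam y) <> qzero ->
    [/\ sig x y != 0,
        qmul (qmul (Gam (ginv x)) (Gam x)) (Gam y)
          = qscale (sig x y) (qmul (Gam (ginv x)) (Gam (gmul x y)))
      & qmul (qmul (Gam x) (Gam y)) (Gam (ginv y))
          = qscale (sig x y) (qmul (Gam (gmul x y)) (Gam (ginv y)))].

Arguments cp_zero {G K T} P.
Arguments cp_delta {G K T} P a x.
Arguments cp_mul {G K T} P p q.
Arguments cp_scale {G K T} P al p.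
Arguments Gamma_theta {G K T} P x.

(* Main.v *)
Require Import Defs.
From mathcomp Require Import all_boot all_algebra.
From Stdlib Require Import ClassicalEpsilon.

Set Implicit Arguments.
Unset Strict Implicit.
Unset Printing Implicit Defensive.
Import GRing.Theory.
Local Open Scope ring_scope.

Section S.
Variables (G : groupoid) (K : fieldType) (T : ksemigroup K)
  (P : twisted_partial_action G T).

Local Notation D := (tdom P).
Local Notation e := (tone P).
Local Notation th := (tth P).
Local Notation ti := (ttinv P).
Local Notation sg := (tsig P).
Local Notation z0 := (@szero K T).

Lemma gdd (x : G) : gd (gd x) = gd x.
Proof. by have := gd_r (gd x); rewrite gr_d. Qed.

Lemma ginv_d (x : G) : ginv (gd x) = gd x.
Proof.
by rewrite -[LHS](gmul_d (ginv (gd x))) gd_inv gr_d gmul_invl gdd.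
Qed.

Lemma ginv_mulK (x y : G) : gd x = gr y -> gmul (ginv x) (gmul x y) = y.
Proof.
move=> h; rewrite -gmulA ?gd_inv // gmul_invl h gmul_r //.
Qed.

Lemma mul_invK (x y : G) : gd x = gr y -> gmul (gmul x y) (ginv y) = x.
Proof.
move=> h; rewrite gmulA ?gr_inv // gmul_invr -h gmul_d //.
Qed.

Lemma e_central x s : smul (e x) s = smul s (e x).
Proof.
have h1 : smul (e x) (smul s (e x)) = smul s (e x).
  by apply: tone_l; apply: tdom_mull; exact: tone_in.
have h2 : smul (smul (e x) s) (e x) = smul (e x) s.
  by apply: tone_r; apply: tdom_mulr; exact: tone_in.
by rewrite -h2 smulA h1.
Qed.

Lemma e_idem x : smul (e x) (e x) = e x.
Proof. by apply: tone_l; exact: tone_in. Qed.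

Lemma scale0 k : sscale k z0 = z0.
Proof. by rewrite -{1}(smul0l z0) sscale_mulr smul0l. Qed.

Lemma D_scale x k a : D x a -> D x (sscale k a).
Proof.
move=> Ha; rewrite -(tone_l Ha) sscale_mulr; apply: tdom_mulr; exact: tone_in.
Qed.

Lemma th0 x : th x z0 = z0.
Proof.
have h1 : D (ginv x) (ti x z0) by apply: ttinv_in; exact: tdom_zero.
rewrite -{1}(smul0l (ti x z0)) tth_mul //; last exact: tdom_zero.
by rewrite tth_ttinv ?smul0r //; exact: tdom_zero.
Qed.

Lemma ti0 x : ti x z0 = z0.
Proof. by rewrite -{1}(th0 x) ttinv_tth //; exact: tdom_zero. Qed.

Lemma ti_scale x k a : D x a -> ti x (sscale k a) = sscale k (ti x a).
Proof.
move=> Ha; have h1 : D (ginv x) (ti x a) by exact: ttinv_in.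
by rewrite -{1}(tth_ttinv Ha) -tth_scale // ttinv_tth //; exact: D_scale.
Qed.

Lemma th_one x : th x (e (ginv x)) = e x.
Proof.
have Df : D x (th x (e (ginv x))) by apply: tth_in; exact: tone_in.
have Ha : D (ginv x) (ti x (e x)) by apply: ttinv_in; exact: tone_in.
have h : smul (th x (e (ginv x))) (th x (ti x (e x))) = th x (ti x (e x)).
  by rewrite -tth_mul ?tone_l //; exact: tone_in.
by rewrite tth_ttinv ?(tone_r Df) in h => //; exact: tone_in.
Qed.

Lemma ti_one x : ti x (e x) = e (ginv x).
Proof. by rewrite -th_one ttinv_tth //; exact: tone_in. Qed.

Lemma IdI x z f : D x f -> D z f ->
  (forall b, D x b -> D z b -> smul f b = b) -> f = smul (e x) (e z).
Proof.
move=> Hx Hz Hb.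
have Dg1 : D x (smul (e x) (e z)) by apply: tdom_mulr; exact: tone_in.
have Dg2 : D z (smul (e x) (e z)) by apply: tdom_mull; exact: tone_in.
rewrite -(Hb _ Dg1 Dg2) -smulA (tone_r Hx) (tone_r Hz) //.
Qed.

Lemma Gp x y : gd x = gr y ->
  th x (smul (ti x (e x)) (e y)) = smul (e x) (e (gmul x y)).
Proof.
move=> h; rewrite ti_one.
have Da1 : D (ginv x) (smul (e (ginv x)) (e y)) by apply: tdom_mulr; exact: tone_in.
have Da2 : D y (smul (e (ginv x)) (e y)) by apply: tdom_mull; exact: tone_in.
have [H1 H2] := tth_image P h.
have [Hf1 Hf2] := H1 _ Da1 Da2.
apply: IdI => // b Hb1 Hb2.
have [a [Ha1 Ha2 <-]] := H2 _ Hb1 Hb2.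
by rewrite -tth_mul // smulA (tone_l Ha2) (tone_l Ha1).
Qed.

Lemma th_d x a : D (gd x) a -> th (gd x) a = a.
Proof. move=> Ha; apply: tth_id; [by exists x | by rewrite ginv_d]. Qed.

Lemma ti_d x a : D (gd x) a -> ti (gd x) a = a.
Proof.
move=> Ha; have h1 := tth_ttinv Ha.
rewrite th_d in h1 => //; have := ttinv_in Ha; by rewrite ginv_d.
Qed.

Lemma scale_inj0 k a : k != 0 -> sscale k a = z0 -> a = z0.
Proof.
move=> kn h; rewrite -(sscale1 a) -(mulVf kn) -sscaleA h scale0 //.
Qed.

Lemma delta_some a x : D x a -> a <> z0 ->
  proj1_sig (cp_delta P a x) = Some (a, x).
Proof.
move=> Ha Hn; rewrite /cp_delta; case: excluded_middle_informative => [h|h] //=.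
by exfalso; apply: h.
Qed.

Lemma delta0 x : cp_delta P z0 x = cp_zero P.
Proof.
rewrite /cp_delta; case: excluded_middle_informative => [[_ h]|h] //.
Qed.

Lemma cp_mul_delta a x b y : D x a -> D y b -> gd x = gr y ->
  cp_mul P (cp_delta P a x) (cp_delta P b y) =
  cp_delta P (sscale (sg x y) (th x (smul (ti x a) b))) (gmul x y).
Proof.
move=> Ha Hb h.
case: (classic (a = z0)) => [->|an].
  by rewrite delta0 ti0 smul0l th0 scale0 delta0.
case: (classic (b = z0)) => [->|bn].
  by rewrite delta0 smul0r th0 scale0 delta0 /cp_mul /=; case: (proj1_sig _) => [[]|].
rewrite /cp_mul (delta_some Ha an) (delta_some Hb bn).
by case: excluded_middle_informative.
Qed.

Lemma cp_scale_delta k a x : D x a ->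
  cp_scale P k (cp_delta P a x) = cp_delta P (sscale k a) x.
Proof.
move=> Ha; case: (classic (a = z0)) => [->|an].
  by rewrite delta0 scale0 delta0.
by rewrite /cp_scale (delta_some Ha an).
Qed.

Lemma lam w c s t : D w c -> (s = 0 -> c = z0) -> (t = 0 -> c = z0) ->
  lambda_rel (cp_scale P) (cp_delta P (sscale s c) w) (cp_delta P (sscale t c) w).
Proof.
move=> Dc Hs Ht.
case: (eqVneq s 0) => [s0|sn].
  rewrite (Hs s0) !scale0; exists 1; rewrite oner_neq0 cp_scale_delta ?scale0 //.
  exact: tdom_zero.
case: (eqVneq t 0) => [t0|tn].
  rewrite (Ht t0) !scale0; exists 1; rewrite oner_neq0 cp_scale_delta ?scale0 //.
  exact: tdom_zero.
exists (s / t); split; first by rewrite mulf_neq0 ?invr_neq0.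
rewrite cp_scale_delta; last exact: D_scale.
by rewrite (sscaleA (s / t) t c) mulfVK.
Qed.

Lemma sig0 x y a : gd x = gr y -> sg x y = 0 -> D x a -> D (gmul x y) a -> a = z0.
Proof. by move=> h s0; apply: ((tsig_zero P h).1 s0). Qed.

Lemma GG x y : gd x = gr y ->
  cp_mul P (Gamma_theta P x) (Gamma_theta P y) =
  cp_delta P (sscale (sg x y) (smul (e x) (e (gmul x y)))) (gmul x y).
Proof.
move=> h; rewrite /Gamma_theta cp_mul_delta //; try exact: tone_in.
by rewrite Gp.
Qed.

Lemma Gx_inv x : cp_mul P (Gamma_theta P (ginv x)) (Gamma_theta P x) =
  cp_delta P (sscale (sg (ginv x) x) (e (ginv x))) (gd x).
Proof.
have De : D (gd x) (e (ginv x)) by rewrite -gr_inv; apply: tdom_r; exact: tone_in.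
by rewrite GG ?gd_inv // gmul_invl (tone_r De).
Qed.

Lemma id1 x y : gd x = gr y ->
  cp_mul P (cp_mul P (Gamma_theta P (ginv x)) (Gamma_theta P x)) (Gamma_theta P y) =
  cp_delta P (sscale (sg (ginv x) x) (smul (e (ginv x)) (e y))) y.
Proof.
move=> h.
have De : D (gd x) (e (ginv x)) by rewrite -gr_inv; apply: tdom_r; exact: tone_in.
rewrite Gx_inv /Gamma_theta cp_mul_delta; last (by rewrite gdd); last exact: tone_in;
  last exact: D_scale.
rewrite ti_d; last exact: D_scale. rewrite (@th_d x); last by apply: tdom_mulr; exact: D_scale.
by rewrite {1}h tsig_r sscale1 -sscale_mull h gmul_r.
Qed.

Lemma id1r x y : gd x = gr y ->
  cp_mul P (Gamma_theta P (ginv x)) (Gamma_theta P (gmul x y)) =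
  cp_delta P (sscale (sg (ginv x) (gmul x y)) (smul (e (ginv x)) (e y))) y.
Proof.
move=> h; rewrite GG ?ginv_mulK // gd_inv gr_mul //.
Qed.

Lemma key2 x y : gd x = gr y ->
  ti (gmul x y) (smul (e x) (e (gmul x y))) =
  smul (ti (gmul x y) (e (gmul x y))) (e (ginv y)).
Proof.
move=> h.
have h2 : gd (gmul x y) = gr (ginv y) by rewrite gd_mul // gr_inv.
have := Gp h2; rewrite mul_invK // => E.
rewrite e_central -E ttinv_tth //; apply: tdom_mulr; apply: ttinv_in; exact: tone_in.
Qed.

Lemma id2 x y : gd x = gr y ->
  cp_mul P (cp_mul P (Gamma_theta P x) (Gamma_theta P y)) (Gamma_theta P (ginv y)) =
  cp_delta P (sscale (sg (gmul x y) (ginv y) * sg x y)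
     (smul (e (gmul x y)) (e x))) x.
Proof.
move=> h.
have h2 : gd (gmul x y) = gr (ginv y) by rewrite gd_mul // gr_inv.
have Dc : D (gmul x y) (smul (e x) (e (gmul x y))) by apply: tdom_mull; exact: tone_in.
have Dti : D (ginv (gmul x y)) (ti (gmul x y) (e (gmul x y))) by apply: ttinv_in; exact: tone_in.
rewrite GG // /Gamma_theta cp_mul_delta //; last (by exact: tone_in); last exact: D_scale.
rewrite mul_invK // ti_scale // key2 // -sscale_mull smulA e_idem.
rewrite tth_scale; last by apply: tdom_mulr.
by rewrite (Gp h2) mul_invK // sscaleA.
Qed.

Lemma id2r x y : gd x = gr y ->
  cp_mul P (Gamma_theta P (gmul x y)) (Gamma_theta P (ginv y)) =
  cp_delta P (sscale (sg (gmul x y) (ginv y)) (smul (e (gmul x y)) (e x))) x.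
Proof.
move=> h; rewrite GG ?mul_invK // gd_mul // gr_inv //.
Qed.

Lemma main_ppr : partial_projective_rep (cp_mul P) (cp_scale P) (Gamma_theta P).
Proof.
move=> x y h; split.
  rewrite id1 // id1r //.
  have D1 : D (ginv x) (smul (e (ginv x)) (e y)) by apply: tdom_mulr; exact: tone_in.
  have D2 : D y (smul (e (ginv x)) (e y)) by apply: tdom_mull; exact: tone_in.
  have h' : gd (ginv x) = gr (gmul x y) by rewrite gd_inv gr_mul.
  apply: lam => //.
    move=> s0; apply: (sig0 (gd_inv x) s0) => //; rewrite gmul_invl -gr_inv; exact: tdom_r.
  by move=> s0; apply: (sig0 h' s0) => //; rewrite ginv_mulK.
rewrite id2 // id2r //.
have h2 : gd (gmul x y) = gr (ginv y) by rewrite gd_mul // gr_inv.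
have D1 : D (gmul x y) (smul (e (gmul x y)) (e x)) by apply: tdom_mulr; exact: tone_in.
have D2 : D x (smul (e (gmul x y)) (e x)) by apply: tdom_mull; exact: tone_in.
have Z1 : sg (gmul x y) (ginv y) = 0 -> smul (e (gmul x y)) (e x) = z0.
  by move=> s0; apply: (sig0 h2 s0) => //; rewrite mul_invK.
apply: lam => // /eqP; rewrite mulf_eq0 => /orP [/eqP s0|/eqP s0]; first exact: Z1.
exact: (sig0 h s0).
Qed.

Lemma main_fs : is_factor_set (cp_mul P) (cp_scale P) (cp_zero P) (Gamma_theta P) sg.
Proof.
move=> x y h Hne.
have sn : sg x y != 0.
  by apply/eqP => s0; apply: Hne; rewrite GG // s0 sscale0 delta0.
split => //.
  rewrite id1 // id1r // cp_scale_delta; last by apply: D_scale; apply: tdom_mull; exact: tone_in.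
  rewrite sscaleA.
  case: (classic (smul (e (ginv x)) (e y) = z0)) => [->|cn]; first by rewrite !scale0.
  have D1 : D (ginv x) (smul (e (ginv x)) (e y)) by apply: tdom_mulr; exact: tone_in.
  have D2 : D y (smul (e (ginv x)) (e y)) by apply: tdom_mull; exact: tone_in.
  have := @tsig_cocycle _ _ _ P _ _ _ (gd_inv x) h.
  have s1 : sg (gd x) y = 1 by rewrite h tsig_r.
  rewrite gmul_invl s1 mulr1 => ->; first by [].
  exists (smul (e (ginv x)) (e y)); split => //.
    by rewrite -gr_inv; exact: tdom_r.
  by rewrite h gmul_r.
rewrite id2 // id2r // cp_scale_delta; last by apply: D_scale; apply: tdom_mull; exact: tone_in.
by rewrite sscaleA mulrC.
Qed.

End S.

Theorem mainTheorem15 (G : groupoid) (K : fieldType) (T : ksemigroup K)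
  (P : twisted_partial_action G T) :
  partial_projective_rep (cp_mul P) (cp_scale P) (Gamma_theta P) /\
  is_factor_set (cp_mul P) (cp_scale P) (cp_zero P) (Gamma_theta P) (tsig P).
Proof. split; [exact: main_ppr | exact: main_fs]. Qed.
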